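(* Let $d\ge 3$ and let $P$ be a finite set of points in $\mathbb{R}^d$. Let $C$ be the set of centers of all smallest axis-aligned hypercubes enclosing $P$. Then there exists a minimum-width hypercubic shell enclosing $P$ whose center lies in $C$.
   Context: The $L_\infty$ norm is $\|p\|=\max_i|x_i(p)|$; $\mathbf{B}(c,r)=\{q:\|q-c\|\le r\}$ is the axis-aligned hypercube with center $c$ and radius $r$. A smallest enclosing hypercube of $P$ is one of minimum radius containing $P$. A hypercubic shell with center $c$ is $\mathbf{B}(c,r)\setminus\operatorname{int}\mathbf{B}(c,r')$ with $r\ge r'\ge0$, of width $r-r'$; it encloses $P$ if it contains $P$. A minimum-width hypercubic shell enclosing $P$ is one of smallest width among all hypercubic shells enclosing $P$. *)

(* Defs.v *)
From HB Require Import structures.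
From mathcomp Require Import all_boot all_order all_algebra.
From mathcomp Require Import reals.
Set Implicit Arguments. Unset Strict Implicit. Unset Printing Implicit Defensive.
Import Order.TTheory GRing.Theory Num.Theory.
Local Open Scope ring_scope.

Definition linf (R : realType) (d : nat) (p : 'rV[R]_d) : R :=
  \big[Num.max/0]_(i < d) `|p ord0 i|.

Definition cube_encloses (R : realType) (d : nat) (P : seq 'rV[R]_d)
  (c : 'rV[R]_d) (r : R) : Prop :=
  0 <= r /\ forall p, p \in P -> linf (p - c) <= r.

Definition smallest_enclosing_cube (R : realType) (d : nat) (P : seq 'rV[R]_d)
  (c : 'rV[R]_d) (r : R) : Prop :=
  cube_encloses P c r /\
  forall c' r', cube_encloses P c' r' -> r <= r'.

(* The shell B(c,r) \ int B(c,r'), r >= r' >= 0, contains P.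
   int B(c,r') = { q : ||q - c|| < r' }. *)
Definition shell_encloses (R : realType) (d : nat) (P : seq 'rV[R]_d)
  (c : 'rV[R]_d) (r r' : R) : Prop :=
  0 <= r' /\ r' <= r /\
  forall p, p \in P -> r' <= linf (p - c) /\ linf (p - c) <= r.

Definition min_width_shell (R : realType) (d : nat) (P : seq 'rV[R]_d)
  (c : 'rV[R]_d) (r r' : R) : Prop :=
  shell_encloses P c r r' /\
  forall c2 r2 r2', shell_encloses P c2 r2 r2' -> r - r' <= r2 - r2'.

(* Main.v *)
Require Import Defs.
From HB Require Import structures.
From mathcomp Require Import all_boot all_order all_algebra.
From mathcomp Require Import reals.
From mathcomp Require Import all_classical all_reals all_analysis.
From mathcomp Require Import lra.
Import Order.TTheory GRing.Theory Num.Theory.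
Import numFieldNormedType.Exports.
Local Open Scope ring_scope.

Section Gen.
Variable R : realType.

Lemma bigmin_seqP (T : eqType) (F : T -> R) (x0 : T) (s : seq T) :
  let m := \big[Num.min/F x0]_(y <- s) F y in
  m <= F x0 /\ (forall y, y \in s -> m <= F y) /\
  (m = F x0 \/ exists2 y, y \in s & m = F y).
Proof.
elim: s => [|a s [IH1 [IH2 IH3]]] /=.
  by rewrite big_nil; split=> //; split=> //; left.
rewrite big_cons; split; first by rewrite ge_min IH1 orbT.
split.
  move=> y; rewrite in_cons => /orP[/eqP->|ys]; first by rewrite ge_min lexx.
  by rewrite ge_min IH2 ?orbT.
case: (leP (F a) (\big[Num.min/F x0]_(y <- s) F y)) => h.
  by right; exists a; rewrite ?mem_head.
case: IH3 => [->|[y ys ->]]; first by left.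
by right; exists y => //; rewrite in_cons ys orbT.
Qed.

Lemma bigmax_seqP (T : eqType) (F : T -> R) (x0 : T) (s : seq T) :
  let m := \big[Num.max/F x0]_(y <- s) F y in
  F x0 <= m /\ (forall y, y \in s -> F y <= m) /\
  (m = F x0 \/ exists2 y, y \in s & m = F y).
Proof.
elim: s => [|a s [IH1 [IH2 IH3]]] /=.
  by rewrite big_nil; split=> //; split=> //; left.
rewrite big_cons; split; first by rewrite le_max IH1 orbT.
split.
  move=> y; rewrite in_cons => /orP[/eqP->|ys]; first by rewrite le_max lexx.
  by rewrite le_max IH2 ?orbT.
case: (leP (\big[Num.max/F x0]_(y <- s) F y) (F a)) => h.
  by right; exists a; rewrite ?mem_head.
case: IH3 => [->|[y ys ->]]; first by left.
by right; exists y => //; rewrite in_cons ys orbT.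
Qed.
End Gen.

Section L.
Variables (R : realType) (d : nat).
Implicit Types x y : 'rV[R]_d.

Lemma linf_ge0 x : 0 <= linf x.
Proof. by rewrite /linf; apply/bigmax_geP; left. Qed.

Lemma linf_coord x i : `|x ord0 i| <= linf x.
Proof. exact: (le_bigmax _ (fun i => `|x ord0 i|)). Qed.

Lemma linf_le x r : 0 <= r -> (forall i, `|x ord0 i| <= r) -> linf x <= r.
Proof. by move=> r0 h; rewrite /linf; apply: bigmax_le. Qed.

Lemma linf_tri x y : linf (x + y) <= linf x + linf y.
Proof.
apply: linf_le; first by rewrite addr_ge0 ?linf_ge0.
move=> i; rewrite mxE; apply: le_trans (ler_normD _ _) _.
by rewrite lerD ?linf_coord.
Qed.

Lemma linfN x : linf (- x) = linf x.
Proof. by rewrite /linf; apply: eq_bigr => i _; rewrite mxE normrN. Qed.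

Lemma linf_norm x : linf x <= `|x|.
Proof.
apply: linf_le => // i.
have -> : `|x| = mx_norm x by [].
rewrite mx_normrE.
by apply/bigmax_geP; right => /=; exists (ord0, i).
Qed.
End L.
Arguments linf_ge0 {R d}.
Arguments linf_coord {R d}.
Arguments linf_le {R d}.
Arguments linf_tri {R d}.
Arguments linfN {R d}.
Arguments linf_norm {R d}.

Theorem lemma3 (R : realType) (d : nat) (hd : (3 <= d)%N)
  (P : seq 'rV[R]_d) :
  exists (c : 'rV[R]_d) (r r' : R),
    min_width_shell P c r r' /\
    (exists rc : R, smallest_enclosing_cube P c rc).
Proof.
case: P => [|p0 P'].
  exists 0, 0, 0; split; last first.
    exists 0; split; first by split.
    by move=> c' r' [].
  split; first by split.
  by move=> c2 r2 r2' [h1 [h2 _]]; rewrite subrr subr_ge0.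
set P := p0 :: P'.
have p0P : p0 \in P by rewrite mem_head.
pose a i := \big[Num.min/p0 ord0 i]_(p <- P) p ord0 i.
pose b i := \big[Num.max/p0 ord0 i]_(p <- P) p ord0 i.
have aP i : (forall p, p \in P -> a i <= p ord0 i) /\ exists2 p, p \in P & a i = p ord0 i.
  have [_ [h1 h2]] := @bigmin_seqP R _ (fun p : 'rV[R]_d => p ord0 i) p0 P.
  split; first exact: h1.
  by case: h2 => [h|//]; exists p0.
have bP i : (forall p, p \in P -> p ord0 i <= b i) /\ exists2 p, p \in P & b i = p ord0 i.
  have [_ [h1 h2]] := @bigmax_seqP R _ (fun p : 'rV[R]_d => p ord0 i) p0 P.
  split; first exact: h1.
  by case: h2 => [h|//]; exists p0.
pose rs := \big[Num.max/0]_(i < d) ((b i - a i) / 2).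
have rs_ge i : (b i - a i) / 2 <= rs by exact: (le_bigmax _ (fun i => (b i - a i) / 2)).
have rs0 : 0 <= rs by apply/bigmax_geP; left.
have coordle c r p i : p \in P -> cube_encloses P c r -> `|p ord0 i - c ord0 i| <= r.
  move=> pP [_ h]; have hl := h p pP; have := linf_coord (p - c) i.
  rewrite !mxE => hc; exact: le_trans hc hl.
have lower c r : cube_encloses P c r -> rs <= r.
  move=> hc; apply: bigmax_le; first by case: hc.
  move=> i _; have [_ [pa paP ->]] := aP i; have [_ [pb pbP ->]] := bP i.
  have := coordle c r pa i paP hc; have := coordle c r pb i pbP hc.
  rewrite !ler_norml => /andP[h1 h2] /andP[h3 h4]; lra.
pose K := [set v : 'rV[R]_d | forall i, `[b i - rs, a i + rs]%classic (v ord0 i)]%classic.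
have Kenc c : K c -> cube_encloses P c rs.
  move=> Kc; split=> // p pP; apply: linf_le => // i.
  have := Kc i; rewrite /= in_itv /= => /andP[h1 h2].
  have := (aP i).1 p pP; have := (bP i).1 p pP.
  rewrite !mxE ler_norml => h3 h4; apply/andP; split; lra.
pose f (c : 'rV[R]_d) := \big[Num.min/linf (p0 - c)]_(p <- P) linf (p - c).
have fP c : (forall p, p \in P -> f c <= linf (p - c)) /\ exists2 p, p \in P & f c = linf (p - c).
  have [_ [h1 h2]] := @bigmin_seqP R _ (fun p : 'rV[R]_d => linf (p - c)) p0 P.
  split; first exact: h1.
  by case: h2 => [h|//]; exists p0.
have flip c c' : f c <= f c' + linf (c' - c).
  have [_ [p pP ->]] := fP c'.
  apply: le_trans ((fP c).1 p pP) _.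
  have -> : p - c = (p - c') + (c' - c) by rewrite addrA subrK.
  exact: linf_tri.
have fcont : continuous f.
  move=> x; apply/(@cvgrPdist_lt _ _ _ (nbhs x) (nbhs_filter x)) => eps eps0.
  have := @near_ball R _ x eps eps0.
  apply: filterS => t ht.
  have {}ht : `|x - t| < eps by move: ht; rewrite -ball_normE.
  have h1 := flip x t; have h2 := flip t x.
  have h3 : linf (t - x) <= `|x - t|.
    by rewrite -linfN opprB; apply: linf_norm.
  have h4 : linf (x - t) <= `|x - t| by apply: linf_norm.
  rewrite ltr_distlC; apply/andP; split; lra.
have K0 : (K !=set0)%classic.
  exists (\row_(i < d) ((a i + b i)/2)) => i; rewrite mxE /= in_itv /=.
  have := rs_ge i; have := (aP i).1 p0 p0P; have := (bP i).1 p0 p0P.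
  move=> h1 h2 h3; apply/andP; split; lra.
have Kc : compact K.
  exact: (@rV_compact R d (fun i => `[b i - rs, a i + rs]%classic) (fun i => @segment_compact R _ _)).
have [cm cmK cmmax] := compact_EVT_max K0 Kc (@continuous_subspaceT _ _ K f fcont).
have cmK' : K cm by rewrite inE in cmK.
exists cm, rs, (f cm).
split; last by exists rs; split; [exact: Kenc | exact: lower].
split.
  have [_ [p pP fp]] := fP cm.
  split; first by rewrite fp linf_ge0.
  have [_ hc] := Kenc cm cmK'.
  split; first exact: le_trans ((fP cm).1 p0 p0P) (hc p0 p0P).
  move=> q qP; split; [exact: (fP cm).1 | exact: hc].
move=> c2 r2 r2' [h0 [h1 h2]].
have enc2 : cube_encloses P c2 r2.
  by split; [lra | move=> p pP; exact: (h2 p pP).2].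
have rsr2 := lower _ _ enc2.
pose c' := \row_(i < d) Num.max (b i - rs) (Num.min (c2 ord0 i) (a i + rs)).
have c'K : K c'.
  move=> i; rewrite mxE /= in_itv /=.
  have := rs_ge i; have:= (aP i).1 p0 p0P; have := (bP i).1 p0 p0P.
  move=> h3 h4 h5.
  rewrite le_max lexx /= ge_max ge_min lexx orbT andbT; lra.
have c'close i : `|(c' - c2) ord0 i| <= r2 - rs.
  rewrite !mxE.
  have := rs_ge i; have:= (aP i).1 p0 p0P; have := (bP i).1 p0 p0P.
  move=> h3 h4 h5.
  have [_ [pa paP ea]] := aP i; have [_ [pb pbP eb]] := bP i.
  have := coordle c2 r2 pa i paP enc2; have := coordle c2 r2 pb i pbP enc2.
  rewrite -ea -eb !ler_norml => /andP[h6 h7] /andP[h8 h9].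
  case: (leP (c2 ord0 i) (a i + rs)) => h10.
    case: (leP (b i - rs) (c2 ord0 i)) => h11; apply/andP; split; lra.
  case: (leP (b i - rs) (a i + rs)) => h11; apply/andP; split; lra.
have linfc' : linf (c' - c2) <= r2 - rs.
  by apply: linf_le => //; rewrite subr_ge0.
have fc' : r2' - (r2 - rs) <= f c'.
  have [_ [p pP ->]] := fP c'.
  have := linf_tri (p - c') (c' - c2).
  rewrite (_ : p - c' + (c' - c2) = p - c2); last by rewrite addrA subrK.
  have := (h2 p pP).1; lra.
have := cmmax c' (mem_set c'K); lra.
Qed.
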